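(* In the setting of problem (P) under the standing assumptions, run Algorithm LCPG with $\lim_k\eta^k=\eta$, and suppose every feasible point of (P) satisfies MFCQ, so that there is a constant $B>0$ with $\|\lambda^{k+1}\|\le B$ for all $k$. Let $D:=\sqrt{(\psi_0(x^0)-\psi_0^* )/L_0}$ and let $\alpha_0,\dots,\alpha_K>0$ be nondecreasing. Then $$\sum_{k=0}^K\alpha_k\|\partial_x\mathcal{L}(x^{k+1},\lambda^{k+1})\|_-^2\le8(L_0+B\|L\|)^2D^2\alpha_K,$$ $$\sum_{k=0}^K\alpha_k\langle\lambda^{k+1},|\psi(x^{k+1})-\eta|\rangle\le2B\|L\|D^2\alpha_K+B\sum_{k=0}^K\alpha_k\|\eta-\eta^k\|,$$ where $|\cdot|$ is taken componentwise. Consequently, if $\hat k\in\{0,\dots,K\}$ is drawn with $\Pr(\hat k=k)=\alpha_k/\sum_{j=0}^K\alpha_j$, then $x^{\hat k+1}$ is a randomized $\epsilon_K$ type-I KKT point of (P) (with multiplier $\lambda^{\hat k+1}$) for $$\epsilon_K=\frac{1}{\sum_{k=0}^K\alpha_k}\max\Big\{8(L_0+B\|L\|)^2D^2\alpha_K,\ 2B\|L\|D^2\alpha_K+B\sum_{k=0}^K\alpha_k\|\eta-\eta^k\|\Big\}.$$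
   Context: Problem (P): minimize $\psi_0(x):=f_0(x)+\chi_0(x)$ over $x\in\mathbb{R}^d$ subject to $\psi_i(x):=f_i(x)+\chi_i(x)\le\eta_i$, $i\in[m]:=\{1,\dots,m\}$. Standing assumptions: $\chi_0$ is proper, convex, lower semicontinuous; each $\chi_i$ ($i\in[m]$) is convex and continuous on $\mathrm{dom}\,\chi_0$; each $f_i$ ($i=0,\dots,m$) is differentiable with $L_i$-Lipschitz gradient on $\mathrm{dom}\,\chi_0$; $L:=(L_1,\dots,L_m)^\top$; the optimal value $\psi_0^*$ of (P) is finite; the feasible set $\mathcal{X}:=\{x\in\mathrm{dom}\,\chi_0:\psi_i(x)\le\eta_i,\ i\in[m]\}$ is nonempty and compact. Write $\psi=(\psi_1,\dots,\psi_m)^\top$, $\eta=(\eta_1,\dots,\eta_m)^\top$; vector inequalities are componentwise. Subdifferential: $\partial\psi_i(x):=\nabla f_i(x)+\partial\chi_i(x)$ (convex subdifferential of $\chi_i$, Minkowski sum). Lagrangian $\mathcal{L}(x,\lambda)=\psi_0(x)+\sum_{i=1}^m\lambda_i(\psi_i(x)-\eta_i)$ and $\partial_x\mathcal{L}(x,\lambda):=\partial\psi_0(x)+\sum_i\lambda_i\partial\psi_i(x)$. For a set $S$, $\|S\|_-:=\inf\{\|s\|:s\in S\}$. Algorithm LCPG: given $x^0\in\mathrm{dom}\,\chi_0$ and $\eta^0\in\mathbb{R}^m$ with $\psi(x^0)<\eta^0<\eta$. For $k=0,1,\dots$: define for $i=0,\dots,m$ the function $\psi_i^k(x):=f_i(x^k)+\langle\nabla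 f_i(x^k),x-x^k\rangle+\frac{L_i}{2}\|x-x^k\|^2+\chi_i(x)$; let $x^{k+1}$ be the minimizer of $\psi_0^k(x)$ subject to $\psi_i^k(x)\le\eta_i^k$, $i\in[m]$ (the $k$-th subproblem); set $\eta^{k+1}=\eta^k+\delta^k$ with $\delta^k\in\mathbb{R}^m$, $\delta^k>0$, chosen so that $\eta^{k+1}<\eta$. A vector $\lambda^{k+1}\in\mathbb{R}^m_+$ is a Lagrange multiplier of the $k$-th subproblem if $0\in\partial\psi_0^k(x^{k+1})+\sum_i\lambda_i^{k+1}\partial\psi_i^k(x^{k+1})$ and $\lambda_i^{k+1}(\psi_i^k(x^{k+1})-\eta_i^k)=0$ for all $i\in[m]$, where $\partial\psi_i^k(x)=\nabla f_i(x^k)+L_i(x-x^k)+\partial\chi_i(x)$. MFCQ: a point $x$ satisfies MFCQ if there is $z\in\mathbb{R}^d$ with $\langle z,v\rangle\le0$ for all $v$ in the normal cone $N_{\mathrm{dom}\,\chi_0}(x)$ and $\max_{v\in\partial\psi_i(x)}\langle v,z\rangle<0$ for every $i\in\mathcal{A}(x):=\{i\in[m]:\psi_i(x)=\eta_i\}$. Type-I KKT: $x$ is an $\epsilon$ type-I KKT point of (P) if $\psi(x)\le\eta$ and there is $\lambda\in\mathbb{R}^m_+$ with $\|\partial_x\mathcal{L}(x,\lambda)\|_-^2\le\epsilon$ and $-\sum_i\lambda_i(\psi_i(x)-\eta_i)\le\epsilon$. It is a randomized $\epsilon$ type-I KKT point if $x,\lambda$ are random, feasible, and these two inequalities hold in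 expectation. *)

(* Defs.v *)
From HB Require Import structures.
From mathcomp Require Import all_boot all_order all_algebra.
From mathcomp Require Import all_classical all_reals all_analysis.
Set Implicit Arguments.
Unset Strict Implicit.
Unset Printing Implicit Defensive.
Import Order.TTheory GRing.Theory Num.Theory.
Import numFieldNormedType.Exports.
Local Open Scope classical_set_scope.
Local Open Scope ring_scope.

Section LCPG.
Context {R : realType}.

Definition dotv {n} (u v : 'rV[R]_n) : R := \sum_(i < n) u ord0 i * v ord0 i.
Definition enorm {n} (u : 'rV[R]_n) : R := Num.sqrt (dotv u u).

Definition edom {n} (h : 'rV[R]_n -> \bar R) : set 'rV[R]_n :=
  [set x | (h x < +oo)%E].

Definition proper_efun {n} (h : 'rV[R]_n -> \bar R) : Prop :=
  (forall x, h x != -oo%E) /\ exists x, h x \is a fin_num.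

Definition convex_efun {n} (h : 'rV[R]_n -> \bar R) : Prop :=
  forall (x y : 'rV[R]_n) (t : R), 0 < t < 1 ->
    (h (t *: x + (1 - t) *: y)%R <= (t%:E * h x + (1 - t)%:E * h y)%E)%E.

Definition subdiff {n} (h : 'rV[R]_n -> \bar R) (x : 'rV[R]_n) : set 'rV[R]_n :=
  [set v | h x \is a fin_num /\ forall y, (h x + (dotv v (y - x))%:E <= h y)%E].

Definition ncone {n} (C : set 'rV[R]_n) (x : 'rV[R]_n) : set 'rV[R]_n :=
  [set v | forall y, C y -> dotv v (y - x) <= 0].

(* || S ||_- := inf { ||s|| : s in S }  (= +oo for S empty) *)
Definition normminus {n} (S : set 'rV[R]_n) : \bar R :=
  ereal_inf [set (enorm s)%:E | s in S].

(* data of problem (P); index 0 = objective, 'I_m = constraints 1..m *)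
Record problem (d m : nat) := Problem {
  f0 : 'rV[R]_d -> R;
  g0 : 'rV[R]_d -> 'rV[R]_d;
  chi0 : 'rV[R]_d -> \bar R;
  L0 : R;
  fc : 'I_m -> 'rV[R]_d -> R;
  gc : 'I_m -> 'rV[R]_d -> 'rV[R]_d;
  chic : 'I_m -> 'rV[R]_d -> \bar R;
  Lc : 'rV[R]_m;
  etaP : 'rV[R]_m
}.

Section Problem.
Variables (d m : nat) (P : problem d m).

Definition domX := edom (chi0 P).

Definition psi0 (x : 'rV[R]_d) : \bar R := ((f0 P x)%:E + chi0 P x)%E.
Definition psi (i : 'I_m) (x : 'rV[R]_d) : \bar R := ((fc P i x)%:E + chic P i x)%E.

Definition feas : set 'rV[R]_d :=
  [set x | domX x /\ forall i, (psi i x <= (etaP P ord0 i)%:E)%E].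

Definition psi0star : \bar R := ereal_inf (psi0 @` feas).

Definition smooth_on (f : 'rV[R]_d -> R) (g : 'rV[R]_d -> 'rV[R]_d) (L : R) : Prop :=
  0 <= L /\
  (forall x, domX x -> differentiable f x /\ forall v, 'd f x v = dotv (g x) v) /\
  (forall x y, domX x -> domX y -> enorm (g x - g y) <= L * enorm (x - y)).

Definition standing_assumptions : Prop :=
  [/\ proper_efun (chi0 P), convex_efun (chi0 P) & lower_semicontinuous (chi0 P)] /\
  (forall i, convex_efun (chic P i) /\ (forall x, chic P i x != -oo%E) /\
             (forall x, domX x -> chic P i x \is a fin_num) /\
             {within domX, continuous (fun x => fine (chic P i x))}) /\
  (smooth_on (f0 P) (g0 P) (L0 P) /\
   forall i, smooth_on (fc P i) (gc P i) (Lc P ord0 i)) /\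
  psi0star \is a fin_num /\
  (feas !=set0 /\ compact feas).

Definition subdiff_psi (i : 'I_m) (x : 'rV[R]_d) : set 'rV[R]_d :=
  [set gc P i x + v | v in subdiff (chic P i) x].

Definition subdiffL (x : 'rV[R]_d) (lam : 'rV[R]_m) : set 'rV[R]_d :=
  [set w | exists v0 (vs : 'I_m -> 'rV[R]_d),
     [/\ subdiff (chi0 P) x v0, (forall i, subdiff (chic P i) x (vs i)) &
         w = (g0 P x + v0) + \sum_(i < m) lam ord0 i *: (gc P i x + vs i)]].

Definition MFCQ (x : 'rV[R]_d) : Prop :=
  exists z : 'rV[R]_d,
    (forall v, ncone domX x v -> dotv z v <= 0) /\
    forall i, psi i x = (etaP P ord0 i)%:E ->
      (ereal_sup [set (dotv v z)%:E | v in subdiff_psi i x] < 0)%E.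

Definition model (f : 'rV[R]_d -> R) (g : 'rV[R]_d -> 'rV[R]_d) (L : R)
  (chi : 'rV[R]_d -> \bar R) (xk x : 'rV[R]_d) : \bar R :=
  ((f xk + dotv (g xk) (x - xk) + L / 2 * enorm (x - xk) ^+ 2)%:E + chi x)%E.
Definition psi0k xk := model (f0 P) (g0 P) (L0 P) (chi0 P) xk.
Definition psik i xk := model (fc P i) (gc P i) (Lc P ord0 i) (chic P i) xk.

Definition subprob_sol (xk : 'rV[R]_d) (etak : 'rV[R]_m) (x' : 'rV[R]_d) : Prop :=
  (forall i, (psik i xk x' <= (etak ord0 i)%:E)%E) /\
  forall y, (forall i, (psik i xk y <= (etak ord0 i)%:E)%E) ->
    (psi0k xk x' <= psi0k xk y)%E.

Definition subprob_multiplier (xk : 'rV[R]_d) (etak : 'rV[R]_m)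
  (x' : 'rV[R]_d) (lam : 'rV[R]_m) : Prop :=
  [/\ forall i, 0 <= lam ord0 i,
      (exists v0 (vs : 'I_m -> 'rV[R]_d),
         [/\ subdiff (chi0 P) x' v0, (forall i, subdiff (chic P i) x' (vs i)) &
             0 = (g0 P xk + L0 P *: (x' - xk) + v0) +
                 \sum_(i < m) lam ord0 i *:
                    (gc P i xk + Lc P ord0 i *: (x' - xk) + vs i)]) &
      forall i, ((lam ord0 i)%:E * (psik i xk x' - (etak ord0 i)%:E) = 0)%E].

Definition rand_typeI_KKT (K : nat) (p : nat -> R) (xs : nat -> 'rV[R]_d)
  (ls : nat -> 'rV[R]_m) (eps : R) : Prop :=
  [/\ (forall k, (k <= K)%N -> 0 <= p k) /\ \sum_(k < K.+1) p k = 1,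
      (forall k, (k <= K)%N -> p k != 0 ->
         feas (xs k) /\ forall i, 0 <= ls k ord0 i),
      (\sum_(k < K.+1) (p k)%:E *
         (normminus (subdiffL (xs k) (ls k)) * normminus (subdiffL (xs k) (ls k)))
         <= eps%:E)%E &
      \sum_(k < K.+1) p k *
         (- \sum_(i < m) ls k ord0 i * (fine (psi i (xs k)) - etaP P ord0 i))
         <= eps].

End Problem.
End LCPG.

(* Main.v *)
Require Import Defs.
From HB Require Import structures.
From mathcomp Require Import all_boot all_order all_algebra.
From mathcomp Require Import all_classical all_reals all_analysis.
From mathcomp Require Import ring lra.
Import Order.TTheory GRing.Theory Num.Theory.
Import numFieldNormedType.Exports.
Local Open Scope classical_set_scope.
Local Open Scope ring_scope.



Section Vec.
Context {R : realType} {n : nat}.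
Implicit Types u v w : 'rV[R]_n.

Lemma dotvC u v : dotv u v = dotv v u.
Proof. by apply: eq_bigr => i _; rewrite mulrC. Qed.
Lemma dotvDl u v w : dotv (u + v) w = dotv u w + dotv v w.
Proof. by rewrite /dotv -big_split; apply: eq_bigr => i _; rewrite !mxE mulrDl. Qed.
Lemma dotvDr u v w : dotv w (u + v) = dotv w u + dotv w v.
Proof. by rewrite dotvC dotvDl !(dotvC w). Qed.
Lemma dotvZl (a : R) u v : dotv (a *: u) v = a * dotv u v.
Proof. by rewrite /dotv mulr_sumr; apply: eq_bigr => i _; rewrite !mxE mulrA. Qed.
Lemma dotvZr (a : R) u v : dotv v (a *: u) = a * dotv v u.
Proof. by rewrite dotvC dotvZl dotvC. Qed.
Lemma dotvNl u v : dotv (- u) v = - dotv u v.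
Proof. by rewrite -scaleN1r dotvZl mulN1r. Qed.
Lemma dotvNr u v : dotv v (- u) = - dotv v u.
Proof. by rewrite dotvC dotvNl dotvC. Qed.
Lemma dotvBl u v w : dotv (u - v) w = dotv u w - dotv v w.
Proof. by rewrite dotvDl dotvNl. Qed.
Lemma dotvBr u v w : dotv w (u - v) = dotv w u - dotv w v.
Proof. by rewrite dotvDr dotvNr. Qed.
Lemma dotv0l v : dotv 0 v = 0.
Proof. by rewrite /dotv big1 // => i _; rewrite mxE mul0r. Qed.
Lemma dotv0r v : dotv v 0 = 0.
Proof. by rewrite dotvC dotv0l. Qed.
Lemma dotv_suml (I : finType) (F : I -> 'rV[R]_n) v :
  dotv (\sum_(i : I) F i) v = \sum_(i : I) dotv (F i) v.
Proof.
apply: (big_ind2 (fun a b => dotv a v = b)) => //; first exact: dotv0l.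
by move=> a b c e <- <-; rewrite dotvDl.
Qed.
Lemma dotvv_ge0 v : 0 <= dotv v v.
Proof. by apply: sumr_ge0 => i _; rewrite -expr2 sqr_ge0. Qed.
Lemma enorm_ge0 v : 0 <= enorm v.
Proof. exact: sqrtr_ge0. Qed.
Lemma enorm_sq v : enorm v ^+ 2 = dotv v v.
Proof. by rewrite /enorm sqr_sqrtr // dotvv_ge0. Qed.
Lemma dotvv_eq0 v : dotv v v = 0 -> v = 0.
Proof.
move=> h; apply/matrixP => i j; rewrite (ord1 i) mxE.
have h' : \sum_(k < n) v ord0 k ^+ 2 = 0.
  by rewrite -[RHS]h /dotv; apply: eq_bigr => k _; rewrite expr2.
have := @psumr_eq0P R _ xpredT (fun k => v ord0 k ^+ 2) (fun k _ => sqr_ge0 (v ord0 k)) h' j isT.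
by move/eqP; rewrite sqrf_eq0 => /eqP.
Qed.

Lemma enorm0 : enorm (0 : 'rV[R]_n) = 0.
Proof. by rewrite /enorm dotv0l sqrtr0. Qed.

Lemma CS u v : dotv u v <= enorm u * enorm v.
Proof.
have [an|a0] := leP (enorm u) 0.
  have a0 : enorm u = 0 by apply/le_anti; rewrite an enorm_ge0.
  have : dotv u u = 0 by have := enorm_sq u; rewrite a0 expr0n => <-.
  by move/dotvv_eq0 => ->; rewrite dotv0l enorm0 mul0r.
have [bn|b0] := leP (enorm v) 0.
  have b0 : enorm v = 0 by apply/le_anti; rewrite bn enorm_ge0.
  have : dotv v v = 0 by have := enorm_sq v; rewrite b0 expr0n => <-.
  by move/dotvv_eq0 => ->; rewrite dotv0r enorm0 mulr0.
have H := dotvv_ge0 (enorm v *: u - enorm u *: v).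
rewrite !dotvBl !dotvBr !dotvZl !dotvZr -!enorm_sq (dotvC v u) in H.
have ab : 0 < enorm u * enorm v by rewrite mulr_gt0.
have H2 : 0 <= (enorm u * enorm v) * (enorm u * enorm v - dotv u v) by lra.
by rewrite pmulr_rge0 // subr_ge0 in H2.
Qed.

Lemma CSN u v : - (enorm u * enorm v) <= dotv u v.
Proof.
have := CS (- u) v; rewrite dotvNl.
suff -> : enorm (- u) = enorm u by rewrite lerNl.
by rewrite /enorm dotvNl dotvNr opprK.
Qed.

Lemma enormN u : enorm (- u) = enorm u.
Proof. by rewrite /enorm dotvNl dotvNr opprK. Qed.

Lemma enormB u v : enorm (u - v) = enorm (v - u).
Proof. by rewrite -enormN opprB. Qed.

Lemma enormZ (k : R) u : enorm (k *: u) = `|k| * enorm u.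
Proof. by rewrite /enorm dotvZl dotvZr mulrA -expr2 sqrtrM ?sqr_ge0 // sqrtr_sqr. Qed.

Lemma enormD u v : enorm (u + v) <= enorm u + enorm v.
Proof.
rewrite {1}/enorm -[X in _ <= X]ger0_norm ?addr_ge0 ?enorm_ge0 // -(@sqrtr_sqr _ (enorm u + enorm v)).
rewrite ler_sqrt ?sqr_ge0 //.
rewrite dotvDl !dotvDr (dotvC v u) sqrrD !enorm_sq.
have := CS u v; lra.
Qed.

Lemma enorm_sum (I : finType) (F : I -> 'rV[R]_n) :
  enorm (\sum_(i : I) F i) <= \sum_(i : I) enorm (F i).
Proof.
apply: (big_ind2 (fun a b => enorm a <= b)).
- by rewrite /enorm dotv0l sqrtr0.
- by move=> a b c e h1 h2; apply: le_trans (enormD _ _) _; exact: lerD.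
- by [].
Qed.


End Vec.


Section Desc.
Context {R : realType} {d m : nat} (P : @problem R d m).

Lemma domX_convex x y t :
  (forall z, chi0 P z != -oo%E) -> convex_efun (chi0 P) ->
  domX P x -> domX P y -> 0 <= t <= 1 -> domX P (x + t *: (y - x)).
Proof.
move=> hp hc dx dy /andP[t0 t1].
have [->|tn0] := eqVneq t 0; first by rewrite scale0r addr0.
have [->|tn1] := eqVneq t 1; first by rewrite scale1r addrC subrK.
have tt : 0 < t < 1 by rewrite !lt_def tn0 t0 eq_sym tn1 t1.
have := hc y x t tt.
have -> : t *: y + (1 - t) *: x = x + t *: (y - x).
  by rewrite scalerBr scalerBl scale1r addrCA.
move=> /le_lt_trans; apply.
have fx : chi0 P x \is a fin_num by rewrite fin_numE hp /= lt_eqF //; exact: dx.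
have fy : chi0 P y \is a fin_num by rewrite fin_numE hp /= lt_eqF //; exact: dy.
by rewrite -(fineK fx) -(fineK fy) -!EFinM -EFinD ltry.
Qed.

Section Line.
Variables (f : 'rV[R]_d -> R) (g : 'rV[R]_d -> 'rV[R]_d) (x v : 'rV[R]_d).
Hypothesis fdiff : forall z, domX P z -> differentiable f z /\ forall w, 'd f z w = dotv (g z) w.

Lemma line_derive t : domX P (x + t *: v) ->
  is_derive t 1 (fun s : R => f (x + s *: v)) (dotv (g (x + t *: v)) v).
Proof.
move=> dz; have [df dg] := fdiff _ dz.
have E : (fun h : R => h^-1 *: (((fun s : R => f (x + s *: v)) \o shift t) (h *: 1)
            - f (x + t *: v))) =
         (fun h : R => h^-1 *: ((f \o shift (x + t *: v)) (h *: v) - f (x + t *: v))).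
  apply: funext => h /=; congr (_ *: (f _ - _)).
  by rewrite /shift /= [h%:A]mulr1 scalerDl addrCA.
apply: DeriveDef; first by rewrite /derivable E; exact: diff_derivable.
by rewrite /derive E -/(derive f (x + t *: v) v) deriveE // dg.
Qed.

Lemma quad_derive (a c s : R) :
  is_derive s 1 (fun u : R => u * a + c * u ^+ 2) (a + c * (2 * s)).
Proof.
have -> : (fun u : R => u * a + c * u ^+ 2) = (id * cst a + cst c * (id ^+ 2)).
  by apply: funext => u.
apply: is_derive_eq.
by rewrite /= !scaler0 addr0 add0r expr1 /GRing.scale /= !mulr1 mulr_natl.
Qed.

Lemma seg_eq c :
  (forall t, 0 <= t <= 1 -> domX P (x + t *: v)) ->
  exists2 s, 0 <= s <= 1 &
    f (x + v) - f x - dotv (g x) v - c = dotv (g (x + s *: v) - g x) v - 2 * c * s.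
Proof.
move=> dseg.
set a := dotv (g x) v.
set F := (fun s : R => f (x + s *: v)) - (fun u : R => u * a + c * u ^+ 2).
have dF : forall s : R, 0 <= s <= 1 -> is_derive s 1 F (dotv (g (x + s *: v)) v - (a + c * (2 * s))).
  move=> s hs; apply: is_deriveB; first exact: line_derive (dseg s hs).
  exact: quad_derive.
have [s hs e] : exists2 s, s \in `[0, 1]%R &
    F 1 - F 0 = (dotv (g (x + s *: v)) v - (a + c * (2 * s))) * (1 - 0).
  apply: MVT_segment => //.
    by move=> s; rewrite in_itv /= => /andP[h1 h2]; apply: dF; rewrite !ltW.
  apply: derivable_within_continuous => s; rewrite in_itv /= => hs.
  by have := dF s hs => -[].
exists s; first by move: hs; rewrite in_itv.
have eF : forall u : R, F u = f (x + u *: v) - (u * a + c * u ^+ 2) by [].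
rewrite !eF scale1r scale0r addr0 subr0 mulr1 in e.
rewrite dotvBl -/a.
move: e; rewrite mul0r expr0n /= mulr0 !addr0; lra.
Qed.
End Line.


Lemma descent f g L :
  (forall z, chi0 P z != -oo%E) -> convex_efun (chi0 P) ->
  smooth_on P f g L -> forall x y, domX P x -> domX P y ->
  (f y <= f x + dotv (g x) (y - x) + L / 2 * enorm (y - x) ^+ 2) /\
  (f x + dotv (g x) (y - x) - L / 2 * enorm (y - x) ^+ 2 <= f y).
Proof.
move=> hp hc [L0 [fd gl]] x y dx dy.
set v := y - x; set n := enorm v; set a := dotv (g x) v.
have dseg : forall t : R, 0 <= t <= 1 -> domX P (x + t *: v).
  by move=> t ht; apply: domX_convex.
have xv : x + v = y by rewrite /v addrC subrK.
have n0 : 0 <= n := enorm_ge0 v.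
have bnd : forall s : R, 0 <= s <= 1 ->
    (dotv (g (x + s *: v) - g x) v <= L * s * n ^+ 2) /\
    (- (L * s * n ^+ 2) <= dotv (g (x + s *: v) - g x) v).
  move=> s /andP[s0 s1].
  have h1 : enorm (g (x + s *: v) - g x) * n <= L * s * n ^+ 2.
    have := gl _ _ (dseg s (introT andP (conj s0 s1))) dx.
    rewrite [x + _ - _]addrC addKr enormZ ger0_norm // -/n => h.
    by rewrite expr2 mulrA -(mulrA L); apply: ler_wpM2r.
  split.
    exact: le_trans (CS _ _) h1.
  by apply: le_trans (CSN _ _); rewrite lerN2.
split.
  have [s hs e] := @seg_eq f g x v fd (L / 2 * n ^+ 2) dseg.
  have [b1 _] := bnd s hs.
  rewrite xv -/a in e.
  have : 2 * (L / 2 * n ^+ 2) * s = L * s * n ^+ 2 by field.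
  lra.
have [s hs e] := @seg_eq f g x v fd (- (L / 2 * n ^+ 2)) dseg.
have [_ b2] := bnd s hs.
rewrite xv -/a in e.
have : 2 * (- (L / 2 * n ^+ 2)) * s = - (L * s * n ^+ 2) by field.
lra.
Qed.
End Desc.


Lemma zmod_eq (V : zmodType) (a b c e : V) : a + b - (c + e + b) = a - c - e.
Proof. by rewrite [c + e + b]addrC opprD addrA addrK opprD addrA. Qed.

Lemma Abound {R : realType} {d m : nat} (P : @problem R d m) f g L y z :
  smooth_on P f g L -> domX P y -> domX P z ->
  enorm (g y - g z - L *: (y - z)) <= 2 * L * enorm (y - z).
Proof.
move=> [L0 [_ gl]] dy dz.
apply: le_trans (enormD _ _) _.
rewrite enormN enormZ ger0_norm //.
have := gl _ _ dy dz; lra.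
Qed.

Section Main.
Context {R : realType} {d m : nat} (P : @problem R d m)
  (x : nat -> 'rV[R]_d) (etak delta lam : nat -> 'rV[R]_m) (B : R).
Hypothesis SA : standing_assumptions P.
Hypothesis L0pos : 0 < L0 P.
Hypothesis dx0 : domX P (x 0%N).
Hypothesis init : forall i, (psi P i (x 0%N) < (etak 0%N ord0 i)%:E)%E /\
             etak 0%N ord0 i < etaP P ord0 i.
Hypothesis sol : forall k, subprob_sol P (x k) (etak k) (x k.+1).
Hypothesis upd : forall k, etak k.+1 = etak k + delta k.
Hypothesis dpos : forall k i, 0 < delta k ord0 i.
Hypothesis etalt : forall k i, etak k.+1 ord0 i < etaP P ord0 i.
Hypothesis mult : forall k, subprob_multiplier P (x k) (etak k) (x k.+1) (lam k.+1).
Hypothesis Bpos : 0 < B.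
Hypothesis lamB : forall k, enorm (lam k.+1) <= B.

Lemma hp : forall z, chi0 P z != -oo%E.
Proof. by case: SA => [[[]]]. Qed.
Lemma hc : convex_efun (chi0 P).
Proof. by case: SA => [[]]. Qed.
Lemma hci : forall i z, domX P z -> chic P i z \is a fin_num.
Proof. by case: SA => _ [h _] i; case: (h i) => _ [_ [hf _]]. Qed.
Lemma sm0 : smooth_on P (f0 P) (g0 P) (L0 P).
Proof. by case: SA => _ [_ [[]]]. Qed.
Lemma smi i : smooth_on P (fc P i) (gc P i) (Lc P ord0 i).
Proof. by case: SA => _ [_ [[_ h]]]. Qed.
Lemma hstar : psi0star P \is a fin_num.
Proof. by case: SA => _ [_ [_ []]]. Qed.

Lemma dom k : domX P (x k).
Proof.
case: k => [|k] //; case: (mult k) => _ [v0 [vs [[h _] _ _]]] _.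
by rewrite /domX /edom /= -(fineK h) ltry.
Qed.

Lemma fin0 k : chi0 P (x k) \is a fin_num.
Proof. by rewrite fin_numE hp /= (lt_eqF (dom k)). Qed.

Definition c0 k := fine (chi0 P (x k)).
Definition ci k i := fine (chic P i (x k)).
Lemma E0 k : chi0 P (x k) = (c0 k)%:E.
Proof. by rewrite /c0 fineK // fin0. Qed.
Lemma Ei k i : chic P i (x k) = (ci k i)%:E.
Proof. by rewrite /ci fineK //; apply: hci; exact: dom. Qed.

Definition Psi0 k := f0 P (x k) + c0 k.
Definition Psi i k := fc P i (x k) + ci k i.
Definition Dl k := x k.+1 - x k.
Definition nD k := enorm (Dl k).
Definition M0 k := f0 P (x k) + dotv (g0 P (x k)) (Dl k) + L0 P / 2 * nD k ^+ 2 + c0 k.+1.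
Definition Mi k i := fc P i (x k) + dotv (gc P i (x k)) (Dl k) + Lc P ord0 i / 2 * nD k ^+ 2 + ci k.+1 i.

Lemma psi0E k : psi0 P (x k) = (Psi0 k)%:E.
Proof. by rewrite /psi0 E0. Qed.
Lemma psiE i k : psi P i (x k) = (Psi i k)%:E.
Proof. by rewrite /psi Ei. Qed.
Lemma M0E k : psi0k P (x k) (x k.+1) = (M0 k)%:E.
Proof. by rewrite /psi0k /model E0. Qed.
Lemma MiE k i : psik P i (x k) (x k.+1) = (Mi k i)%:E.
Proof. by rewrite /psik /model Ei. Qed.


Lemma Mi_le k i : Mi k i <= etak k ord0 i.
Proof. by have := (sol k).1 i; rewrite MiE lee_fin. Qed.

Lemma desc_i k i :
  (fc P i (x k.+1) <= fc P i (x k) + dotv (gc P i (x k)) (Dl k) + Lc P ord0 i / 2 * nD k ^+ 2) /\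
  (fc P i (x k) + dotv (gc P i (x k)) (Dl k) - Lc P ord0 i / 2 * nD k ^+ 2 <= fc P i (x k.+1)).
Proof. exact: (@descent _ _ _ P _ _ _ hp hc (smi i) _ _ (dom k) (dom k.+1)). Qed.

Lemma desc_0 k :
  f0 P (x k.+1) <= f0 P (x k) + dotv (g0 P (x k)) (Dl k) + L0 P / 2 * nD k ^+ 2.
Proof. exact: (@descent _ _ _ P _ _ _ hp hc sm0 _ _ (dom k) (dom k.+1)).1. Qed.

Lemma Psi_le_M k i : Psi i k.+1 <= Mi k i.
Proof. by have [h _] := desc_i k i; rewrite /Psi /Mi; lra. Qed.

Lemma etak_inc k i : etak k ord0 i < etak k.+1 ord0 i.
Proof. by rewrite upd mxE ltrDl dpos. Qed.

Lemma Psi_le_etak k i : Psi i k <= etak k ord0 i.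
Proof.
case: k => [|k].
  by have [h _] := init i; move: h; rewrite psiE lte_fin => /ltW.
apply: le_trans (Psi_le_M k i) _; apply: le_trans (Mi_le k i) _.
exact: ltW (etak_inc k i).
Qed.

Lemma etak_lt k i : etak k ord0 i < etaP P ord0 i.
Proof. by case: k => [|k]; [exact: (init i).2|exact: etalt]. Qed.

Lemma Psi_le_eta k i : Psi i k <= etaP P ord0 i.
Proof. exact: le_trans (Psi_le_etak k i) (ltW (etak_lt k i)). Qed.

Lemma feasible k : feas P (x k).
Proof. by split; [exact: dom|move=> i; rewrite psiE lee_fin Psi_le_eta]. Qed.

Lemma lam_ge0 k i : 0 <= lam k.+1 ord0 i.
Proof. by case: (mult k). Qed.

Lemma decr k : Psi0 k.+1 + L0 P / 2 * nD k ^+ 2 <= Psi0 k.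
Proof.
have [lge [v0 [vs [sd0 sdi e0]]] comp] := mult k.
have hn : dotv (Dl k) (Dl k) = nD k ^+ 2 by rewrite /nD enorm_sq.
have sub0 : c0 k.+1 - dotv v0 (Dl k) <= c0 k.
  have := sd0.2 (x k); rewrite !E0 -EFinD lee_fin.
  by rewrite -opprB dotvNr /Dl.
have subi i : ci k.+1 i - dotv (vs i) (Dl k) <= ci k i.
  have := (sdi i).2 (x k); rewrite !Ei -EFinD lee_fin.
  by rewrite -opprB dotvNr /Dl.
have compi i : lam k.+1 ord0 i * Mi k i = lam k.+1 ord0 i * etak k ord0 i.
  have := comp i; rewrite MiE -EFinB -EFinM => -[] /eqP.
  by rewrite mulrBr subr_eq0 => /eqP.
set G0 := g0 P (x k) + L0 P *: Dl k + v0.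
set Gi := fun i => gc P i (x k) + Lc P ord0 i *: Dl k + vs i.
have esum : dotv G0 (Dl k) + \sum_(i < m) lam k.+1 ord0 i * dotv (Gi i) (Dl k) = 0.
  have H : dotv (G0 + \sum_(i < m) lam k.+1 ord0 i *: Gi i) (Dl k) = 0.
    by rewrite -e0 dotv0l.
  rewrite -[RHS]H dotvDl dotv_suml; congr (_ + _); apply: eq_bigr => i _.
  by rewrite dotvZl.
have hG0 : dotv G0 (Dl k) = dotv (g0 P (x k)) (Dl k) + L0 P * nD k ^+ 2 + dotv v0 (Dl k).
  by rewrite /G0 !dotvDl dotvZl hn.
have hGi i : 0 <= lam k.+1 ord0 i * dotv (Gi i) (Dl k).
  have hL : 0 <= Lc P ord0 i by case: (smi i).
  have e1 : dotv (Gi i) (Dl k) = dotv (gc P i (x k)) (Dl k) + Lc P ord0 i * nD k ^+ 2 + dotv (vs i) (Dl k).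
    by rewrite /Gi !dotvDl dotvZl hn.
  have h1 : Mi k i - Psi i k <= dotv (Gi i) (Dl k).
    have := subi i; rewrite e1 /Mi /Psi.
    have : 0 <= Lc P ord0 i / 2 * nD k ^+ 2 by rewrite mulr_ge0 ?divr_ge0 ?sqr_ge0.
    have : Lc P ord0 i * nD k ^+ 2 = Lc P ord0 i / 2 * nD k ^+ 2 + Lc P ord0 i / 2 * nD k ^+ 2 by field.
    lra.
  have h2 : 0 <= lam k.+1 ord0 i * (Mi k i - Psi i k).
    by rewrite mulrBr compi -mulrBr mulr_ge0 // ?lge // subr_ge0 Psi_le_etak.
  apply: le_trans h2 _; apply: ler_wpM2l => //; exact: lge.
have hs : 0 <= \sum_(i < m) lam k.+1 ord0 i * dotv (Gi i) (Dl k) by apply: sumr_ge0 => i _; exact: hGi.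
have d0 := desc_0 k.
rewrite /Psi0.
have : L0 P * nD k ^+ 2 = L0 P / 2 * nD k ^+ 2 + L0 P / 2 * nD k ^+ 2 by field.
lra.
Qed.


Definition nL := enorm (Lc P).

Lemma nL_ge0 : 0 <= nL.
Proof. exact: enorm_ge0. Qed.

Lemma sumlamL k : \sum_(i < m) lam k.+1 ord0 i * Lc P ord0 i <= B * nL.
Proof.
have -> : \sum_(i < m) lam k.+1 ord0 i * Lc P ord0 i = dotv (lam k.+1) (Lc P) by [].
apply: le_trans (CS _ _) _; apply: ler_wpM2r; [exact: nL_ge0|exact: lamB].
Qed.

Lemma stat k : exists w, subdiffL P (x k.+1) (lam k.+1) w /\
  enorm w <= 2 * (L0 P + B * nL) * nD k.
Proof.
have [lge [v0 [vs [sd0 sdi e0]]] comp] := mult k.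
set w := (g0 P (x k.+1) + v0) + \sum_(i < m) lam k.+1 ord0 i *: (gc P i (x k.+1) + vs i).
exists w; split; first by exists v0, vs; split.
have ew : w = (g0 P (x k.+1) - g0 P (x k) - L0 P *: Dl k) +
    \sum_(i < m) lam k.+1 ord0 i *: (gc P i (x k.+1) - gc P i (x k) - Lc P ord0 i *: Dl k).
  rewrite -[LHS]subr0 [X in _ - X]e0 opprD addrACA zmod_eq -sumrB; congr (_ + _).
  by apply: eq_bigr => i _; rewrite -scalerBr zmod_eq.
rewrite ew; apply: le_trans (enormD _ _) _.
have h0 := @Abound _ _ _ P _ _ _ _ _ sm0 (dom k.+1) (dom k); rewrite -/(Dl k) -/(nD k) in h0.
have h1 : enorm (\sum_(i < m) lam k.+1 ord0 i *: (gc P i (x k.+1) - gc P i (x k) - Lc P ord0 i *: Dl k))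
   <= \sum_(i < m) lam k.+1 ord0 i * Lc P ord0 i * (2 * nD k).
  apply: le_trans (enorm_sum _ _) _; apply: ler_sum => i _.
  rewrite enormZ ger0_norm ?lge // -mulrA; apply: ler_wpM2l; first exact: lge.
  have := @Abound _ _ _ P _ _ _ _ _ (smi i) (dom k.+1) (dom k); rewrite -/(Dl k) -/(nD k); lra.
rewrite -mulr_suml in h1.
have h2 := sumlamL k.
have n0 : 0 <= nD k by exact: enorm_ge0.
have h3 : (\sum_(i < m) lam k.+1 ord0 i * Lc P ord0 i) * (2 * nD k) <= B * nL * (2 * nD k).
  by apply: ler_wpM2r => //; rewrite mulr_ge0.
have : 2 * (L0 P + B * nL) * nD k = 2 * L0 P * nD k + B * nL * (2 * nD k) by ring.
lra.
Qed.

Lemma compl_i k i : lam k.+1 ord0 i * Mi k i = lam k.+1 ord0 i * etak k ord0 i.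
Proof.
have [_ _ comp] := mult k.
have := comp i; rewrite MiE -EFinB -EFinM => -[] /eqP.
by rewrite mulrBr subr_eq0 => /eqP.
Qed.

Lemma fpsiE i k : fine (psi P i (x k)) = Psi i k.
Proof. by rewrite psiE. Qed.

Lemma compl k : \sum_(i < m) lam k.+1 ord0 i * `|fine (psi P i (x k.+1)) - etaP P ord0 i|
  <= B * enorm (etaP P - etak k) + B * nL * nD k ^+ 2.
Proof.
have h i : lam k.+1 ord0 i * `|fine (psi P i (x k.+1)) - etaP P ord0 i| <=
    lam k.+1 ord0 i * (etaP P - etak k) ord0 i + lam k.+1 ord0 i * Lc P ord0 i * nD k ^+ 2.
  rewrite fpsiE ler0_norm ?subr_le0 ?Psi_le_eta // opprB mxE.
  have ci := compl_i k i.
  have [_ d2] := desc_i k i.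
  have l0 := lam_ge0 k i.
  have hm : Mi k i - Psi i k.+1 <= Lc P ord0 i * nD k ^+ 2.
    rewrite /Mi /Psi; have : Lc P ord0 i * nD k ^+ 2 = Lc P ord0 i / 2 * nD k ^+ 2 + Lc P ord0 i / 2 * nD k ^+ 2 by field.
    lra.
  have := ler_wpM2l l0 hm.
  rewrite !mxE; move: ci; lra.
apply: le_trans (ler_sum _ (fun i _ => h i)) _.
rewrite big_split /= -mulr_suml.
apply: lerD.
  have -> : \sum_(i < m) lam k.+1 ord0 i * (etaP P - etak k) ord0 i = dotv (lam k.+1) (etaP P - etak k) by [].
  apply: le_trans (CS _ _) _; apply: ler_wpM2r; [exact: enorm_ge0|exact: lamB].
apply: ler_wpM2r; [exact: sqr_ge0|exact: sumlamL].
Qed.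

Lemma tele K : \sum_(k < K) nD k ^+ 2 * (L0 P / 2) <= Psi0 0 - Psi0 K.
Proof.
elim: K => [|K IH]; first by rewrite big_ord0 subrr.
rewrite big_ord_recr /=; have := decr K; lra.
Qed.

Lemma star_le k : fine (psi0star P) <= Psi0 k.
Proof.
rewrite -lee_fin fineK ?hstar // -psi0E.
by apply: ge_ereal_inf; exists (psi0 P (x k)) => //; exists (x k) => //; exact: feasible.
Qed.

Definition Dsq := (Psi0 0 - fine (psi0star P)) / L0 P.

Lemma Dsq_ge0 : 0 <= Dsq.
Proof. by rewrite /Dsq divr_ge0 ?subr_ge0 ?star_le // ltW. Qed.

Lemma sumnD K : \sum_(k < K.+1) nD k ^+ 2 <= 2 * Dsq.
Proof.
have h := tele K.+1; have h2 := star_le K.+1.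
rewrite -mulr_suml in h.
set S := \sum_(k < K.+1) nD k ^+ 2 in h *.
have -> : S = (S * (L0 P / 2)) * (2 / L0 P) by field; rewrite gt_eqF.
have -> : 2 * Dsq = (Psi0 0 - fine (psi0star P)) * (2 / L0 P).
  by rewrite /Dsq; field; rewrite gt_eqF.
apply: ler_wpM2r; first by rewrite divr_ge0 // ltW.
lra.
Qed.

Lemma nm_bound k (beta : R) : 0 <= beta ->
  ((beta)%:E * (normminus (subdiffL P (x k.+1) (lam k.+1)) *
      normminus (subdiffL P (x k.+1) (lam k.+1))) <=
   (beta * (4 * (L0 P + B * nL) ^+ 2 * nD k ^+ 2))%:E)%E.
Proof.
move=> b0.
have [w [hw hwn]] := stat k.
set nm := normminus _.
have nm0 : (0 <= nm)%E.
  by apply/ereal_infP => _ [s _ <-]; rewrite lee_fin enorm_ge0.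
have nmw : (nm <= (enorm w)%:E)%E.
  by apply: ge_ereal_inf; exists (enorm w)%:E => //; exists w.
have C0 : 0 <= 2 * (L0 P + B * nL) * nD k.
  have hC : 0 <= L0 P + B * nL.
    by apply: addr_ge0; [exact: ltW | apply: mulr_ge0; [exact: ltW|exact: nL_ge0]].
  by rewrite mulr_ge0 ?mulr_ge0 // enorm_ge0.
have nm2 : (nm * nm <= (2 * (L0 P + B * nL) * nD k)%:E * (2 * (L0 P + B * nL) * nD k)%:E)%E.
  apply: lee_pmul => //; apply: le_trans nmw _; by rewrite lee_fin.
rewrite EFinM; apply: lee_pmul => //; first by rewrite mule_ge0.
apply: le_trans nm2 _; rewrite -EFinM lee_fin le_eqVlt; apply/orP; left; apply/eqP.
ring.
Qed.

Lemma main_sec (K : nat) (alpha : nat -> R) :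
  (forall k, (k <= K)%N -> 0 < alpha k) ->
  (forall k, (k < K)%N -> alpha k <= alpha k.+1) ->
  let D := Num.sqrt ((fine (psi0 P (x 0%N)) - fine (psi0star P)) / L0 P) in
  let nL := enorm (Lc P) in
  let bound1 := 8 * (L0 P + B * nL) ^+ 2 * D ^+ 2 * alpha K in
  let bound2 := 2 * B * nL * D ^+ 2 * alpha K +
                B * \sum_(k < K.+1) alpha k * enorm (etaP P - etak k) in
  let S := \sum_(k < K.+1) alpha k in
  [/\ (\sum_(k < K.+1) (alpha k)%:E *
         (normminus (subdiffL P (x k.+1) (lam k.+1)) *
          normminus (subdiffL P (x k.+1) (lam k.+1))) <= bound1%:E)%E,
      \sum_(k < K.+1) alpha k *
         (\sum_(i < m) lam k.+1 ord0 i *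
            `|fine (psi P i (x k.+1)) - etaP P ord0 i|) <= bound2 &
      rand_typeI_KKT P K (fun k => alpha k / S) (fun k => x k.+1)
        (fun k => lam k.+1) (S^-1 * Num.max bound1 bound2)].
Proof using All.
move=> apos amono D nL' b1 b2 S.
have hD : D ^+ 2 = Dsq by rewrite /D psi0E /= sqr_sqrtr //; exact: Dsq_ge0.
have aK : forall k, (k <= K)%N -> alpha k <= alpha K.
  move=> k kK.
  have gen : forall j, (k + j <= K)%N -> alpha k <= alpha (k + j)%N.
    elim=> [|j IH] hj; first by rewrite addn0.
    have hj' : (k + j < K)%N by rewrite -addnS.
    apply: le_trans (IH (ltnW hj')) _; rewrite addnS; exact: amono.
  by have := gen (K - k)%N; rewrite subnKC // => ->; rewrite ?subnKC.
have a0 : forall k : 'I_K.+1, 0 <= alpha k by move=> k; exact/ltW/apos/leq_ord.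
have C2 : 0 <= 4 * (L0 P + B * nL) ^+ 2 by rewrite mulr_ge0 ?sqr_ge0.
have wsum : forall c, 0 <= c ->
    \sum_(k < K.+1) alpha k * (c * nD k ^+ 2) <= alpha K * c * (2 * Dsq).
  move=> c c0.
  apply: (@le_trans _ _ (\sum_(k < K.+1) alpha K * c * nD k ^+ 2)).
    apply: ler_sum => k _; rewrite mulrA; apply: ler_wpM2r; first exact: sqr_ge0.
    by apply: ler_wpM2r => //; apply: aK; exact: leq_ord.
  rewrite -mulr_sumr; apply: ler_wpM2l; last exact: sumnD.
  by rewrite mulr_ge0 // ltW // apos.
have Q1 : \sum_(k < K.+1) alpha k * (4 * (L0 P + B * nL) ^+ 2 * nD k ^+ 2) <= b1.
  apply: le_trans (wsum _ C2) _; rewrite /b1 hD /nL'.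
  rewrite le_eqVlt; apply/orP; left; apply/eqP; rewrite -/nL; ring.
have Q2 : \sum_(k < K.+1) alpha k *
         (\sum_(i < m) lam k.+1 ord0 i *
            `|fine (psi P i (x k.+1)) - etaP P ord0 i|) <= b2.
  apply: (@le_trans _ _ (\sum_(k < K.+1) (B * (alpha k * enorm (etaP P - etak k)) +
                                          alpha k * (B * nL * nD k ^+ 2)))).
    apply: ler_sum => k _; rewrite mulrCA -mulrDr; apply: ler_wpM2l; first exact: a0.
    exact: compl.
  rewrite big_split /= -mulr_sumr.
  have h := wsum (B * nL) (mulr_ge0 (ltW Bpos) nL_ge0).
  rewrite /b2 hD /nL' -/nL addrC; apply: lerD => //.
  apply: le_trans h _; rewrite le_eqVlt; apply/orP; left; apply/eqP; ring.
have S0 : 0 < S.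
  rewrite /S big_ord_recr /=; apply: ltr_wpDl; last exact: apos.
  by apply: sumr_ge0 => k _; apply: ltW; apply: apos; rewrite ltnW.
have Sn0 : S != 0 by rewrite gt_eqF.
have Si0 : 0 <= S^-1 by rewrite invr_ge0 ltW.
split.
- have := lee_sum (index_enum 'I_K.+1) (P := xpredT) (fun (k : 'I_K.+1) _ => nm_bound k _ (a0 k)).
  rewrite sumEFin => h; apply: le_trans h _; by rewrite lee_fin.
- exact: Q2.
split.
- split; first by move=> k kK; rewrite divr_ge0 // ltW // apos.
  by rewrite -mulr_suml divff.
- by move=> k _ _; split; [exact: feasible|exact: lam_ge0].
- have hb : forall k : 'I_K.+1, 0 <= alpha k / S by move=> k; rewrite divr_ge0 ?a0 // ltW.
  apply: le_trans (lee_sum _ (fun (k : 'I_K.+1) _ => nm_bound k _ (hb k))) _.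
  rewrite sumEFin lee_fin.
  have -> : \sum_(k < K.+1) alpha k / S * (4 * (L0 P + B * nL) ^+ 2 * nD k ^+ 2) =
            S^-1 * \sum_(k < K.+1) alpha k * (4 * (L0 P + B * nL) ^+ 2 * nD k ^+ 2).
    by rewrite mulr_sumr; apply: eq_bigr => k _; rewrite mulrAC mulrC -mulrA.
  apply: ler_wpM2l => //; apply: le_trans Q1 _; by rewrite le_max lexx.
- have -> : \sum_(k < K.+1) alpha k / S *
      (- \sum_(i < m) lam k.+1 ord0 i * (fine (psi P i (x k.+1)) - etaP P ord0 i)) =
    S^-1 * \sum_(k < K.+1) alpha k *
         (\sum_(i < m) lam k.+1 ord0 i * `|fine (psi P i (x k.+1)) - etaP P ord0 i|).
    rewrite mulr_sumr; apply: eq_bigr => k _.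
    rewrite -mulrA mulrCA; congr (_ * (_ * _)).
    rewrite -sumrN; apply: eq_bigr => i _; rewrite fpsiE ler0_norm ?subr_le0 ?Psi_le_eta //.
    by rewrite mulrN.
  apply: ler_wpM2l => //; apply: le_trans Q2 _; by rewrite le_max lexx orbT.
Qed.

End Main.

Theorem mainTheorem7 (R : realType) (d m : nat) (P : @problem R d m)
  (x : nat -> 'rV[R]_d)         (* x^k *)
  (etak : nat -> 'rV[R]_m)      (* eta^k *)
  (delta : nat -> 'rV[R]_m)     (* delta^k *)
  (lam : nat -> 'rV[R]_m)       (* lam k.+1 = lambda^{k+1} *)
  (B : R) (K : nat) (alpha : nat -> R) :
  standing_assumptions P ->
  0 < L0 P ->
  (* initialization *)
  domX P (x 0%N) ->
  (forall i, (psi P i (x 0%N) < (etak 0%N ord0 i)%:E)%E /\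
             etak 0%N ord0 i < etaP P ord0 i) ->
  (* iterations of LCPG *)
  (forall k, subprob_sol P (x k) (etak k) (x k.+1)) ->
  (forall k, etak k.+1 = etak k + delta k) ->
  (forall k i, 0 < delta k ord0 i) ->
  (forall k i, etak k.+1 ord0 i < etaP P ord0 i) ->
  etak @ \oo --> etaP P ->
  (forall k, subprob_multiplier P (x k) (etak k) (x k.+1) (lam k.+1)) ->
  (* MFCQ everywhere on the feasible set, with the resulting bound B *)
  (forall y, feas P y -> MFCQ P y) ->
  0 < B ->
  (forall k, enorm (lam k.+1) <= B) ->
  (* weights *)
  (forall k, (k <= K)%N -> 0 < alpha k) ->
  (forall k, (k < K)%N -> alpha k <= alpha k.+1) ->
  let D := Num.sqrt ((fine (psi0 P (x 0%N)) - fine (psi0star P)) / L0 P) in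
  let nL := enorm (Lc P) in
  let bound1 := 8 * (L0 P + B * nL) ^+ 2 * D ^+ 2 * alpha K in
  let bound2 := 2 * B * nL * D ^+ 2 * alpha K +
                B * \sum_(k < K.+1) alpha k * enorm (etaP P - etak k) in
  let S := \sum_(k < K.+1) alpha k in
  [/\ (\sum_(k < K.+1) (alpha k)%:E *
         (normminus (subdiffL P (x k.+1) (lam k.+1)) *
          normminus (subdiffL P (x k.+1) (lam k.+1))) <= bound1%:E)%E,
      \sum_(k < K.+1) alpha k *
         (\sum_(i < m) lam k.+1 ord0 i *
            `|fine (psi P i (x k.+1)) - etaP P ord0 i|) <= bound2 &
      rand_typeI_KKT P K (fun k => alpha k / S) (fun k => x k.+1)
        (fun k => lam k.+1) (S^-1 * Num.max bound1 bound2)].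
Proof.
Proof.
move=> SA L0pos dx0 init sol upd dpos etalt _ mult _ Bpos lamB apos amono.
exact: (@main_sec R d m P x etak delta lam B SA L0pos dx0 init sol upd dpos etalt mult Bpos lamB K alpha apos amono).
Qed.
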